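(* Let $(X_k)_{k\ge0}$ be a random walk with $X_0=0$, $\mathbb{P}[X_{k+1}=X_k+1]=q$ and $\mathbb{P}[X_{k+1}=X_k-1]=p$, where $p+q=1$ and $q<p$. Let $\nu=\inf\{i\ge0: X_i=-1\}$ and for $n\ge0$ let $$u_n(X)=\sum_{i=1}^{\nu}\mathbf 1_{(X_i<n)\wedge(X_i<X_{i-1})},\qquad v_n(X)=\sum_{i=1}^{\nu}X_i\,\mathbf 1_{(X_i<n)\wedge(X_i<X_{i-1})}.$$ Then $$\mathbb{E}[u_n(X)]=\frac{p}{p-q}\Bigl(1-\Bigl(\frac qp\Bigr)^{n+1}\Bigr),\qquad \mathbb{E}[v_n(X)]=\frac{p}{(p-q)^2}\Bigl(2q-p-\bigl(q+n(p-q)\bigr)\Bigl(\frac qp\Bigr)^{n+1}\Bigr).$$ *)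

(* Defs.v *)
From HB Require Import structures.
From mathcomp Require Import all_boot all_order all_algebra.
From mathcomp Require Import all_classical all_reals all_analysis.
Set Implicit Arguments. Unset Strict Implicit. Unset Printing Implicit Defensive.
Import Order.TTheory GRing.Theory Num.Theory.
Local Open Scope classical_set_scope.
Local Open Scope ring_scope.

Section Walk.
Variables (R : realType) (T : Type) (xi : nat -> T -> R).

Definition walk (k : nat) (t : T) : R := \sum_(j < k) xi j t.

Definition hits (t : T) : Prop := exists i, walk i t = -1.

Lemma hits_exP t : hits t -> exists i, (fun i => walk i t == -1) i.
Proof. by move=> [i Hi]; exists i; apply/eqP. Qed.

(* nu = inf {i >= 0 : X_i = -1}; only meaningful on [hits]; the convention
   nu := 0 off [hits] is irrelevant since that event is P-null when q < p *)
Definition nu (t : T) : nat :=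
  match pselect (hits t) with
  | left H => ex_minn (hits_exP H)
  | right _ => 0%N
  end.

Definition down_below (n : nat) (i : nat) (t : T) : bool :=
  (walk i t < n%:R) && (walk i t < walk i.-1 t).

Definition u_n (n : nat) (t : T) : R :=
  \sum_(1 <= i < (nu t).+1) (down_below n i t)%:R.

Definition v_n (n : nat) (t : T) : R :=
  \sum_(1 <= i < (nu t).+1) walk i t * (down_below n i t)%:R.

End Walk.

(* law of the steps: i.i.d. with P(step = +1) = q, P(step = -1) = p,
   expressed as the joint law of every finite initial segment of steps *)
Definition step_law (R : realType) (d : measure_display) (T : measurableType d)
  (P : probability T R) (xi : nat -> T -> R) (p q : R) : Prop :=
  forall (k : nat) (s : k.-tuple bool),
    P [set t : T | forall i : 'I_k, xi i t = (if tnth s i then 1 else -1)] =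
    (\prod_(i < k) (if tnth s i then q else p))%:E.

(* Main.v *)
Require Import Defs.
From HB Require Import structures.
From mathcomp Require Import all_boot all_order all_algebra.
From mathcomp Require Import all_classical all_reals all_analysis.
From mathcomp Require Import ring lra measurable_realfun.
Import Order.TTheory GRing.Theory Num.Def Num.Theory.
Import numFieldNormedType.Exports.
Local Open Scope classical_set_scope.
Local Open Scope ring_scope.
Set Implicit Arguments. Unset Strict Implicit. Unset Printing Implicit Defensive.

Section Comb.
Variables (R : realType) (p q : R).
Hypotheses (hq : 0 <= q) (hqp : q < p) (hpq : p + q = 1).

Fixpoint Ex (K : nat) (F : seq bool -> R) : R :=
  if K is K'.+1 then q * Ex K' (fun s => F (true :: s)) + p * Ex K' (fun s => F (false :: s))
  else F [::].

Lemma hp : 0 < p. Proof. exact: le_lt_trans hq hqp. Qed.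

Lemma Ex_eq K F G : F =1 G -> Ex K F = Ex K G.
Proof. by elim: K F G => [|K IH] F G /= FG; rewrite ?FG //; congr (_ * _ + _ * _); apply: IH => s. Qed.

Lemma Ex_ext K F G : (forall s, size s = K -> F s = G s) -> Ex K F = Ex K G.
Proof.
elim: K F G => [|K IH] F G /= FG; first by rewrite FG.
by congr (_ * _ + _ * _); apply: IH => s hs; rewrite FG //= hs.
Qed.

Lemma Ex_lin K a b F G : Ex K (fun s => a * F s + b * G s) = a * Ex K F + b * Ex K G.
Proof.
elim: K F G => [|K IH] F G //=.
by rewrite IH IH; ring.
Qed.

Lemma Ex_cst K c : Ex K (fun _ => c) = c.
Proof. elim: K => [|K IH] //=; rewrite IH -mulrDl addrC hpq mul1r //. Qed.

Lemma Ex_add K F G : Ex K (fun s => F s + G s) = Ex K F + Ex K G.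
Proof. by rewrite -[Ex K F]mul1r -[Ex K G]mul1r -Ex_lin; apply: Ex_eq => s; rewrite !mul1r. Qed.

Lemma Ex_scale K a F : Ex K (fun s => a * F s) = a * Ex K F.
Proof. by rewrite -[RHS]addr0 -(mul0r (Ex K F)) -Ex_lin; apply: Ex_eq => s; rewrite mul0r addr0. Qed.

Lemma Ex_le K F G : (forall s, F s <= G s) -> Ex K F <= Ex K G.
Proof.
have hp := hp; elim: K F G => [|K IH] F G FG //=.
by apply: lerD; [apply: (ler_wpM2l hq) | apply: (ler_wpM2l (ltW hp))]; apply: IH => s; apply: FG.
Qed.

Definition wt K (s : K.-tuple bool) : R := \prod_(i < K) (if tnth s i then q else p).

Lemma Ex_sum K F : Ex K F = \sum_(s : K.-tuple bool) F s * wt s.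
Proof.
elim: K F => [|K IH] F /=.
  rewrite (big_pred1 [tuple]); last by move=> s /=; apply/esym/eqP; exact: tuple0.
  by rewrite /wt big_ord0 mulr1.
rewrite IH IH.
pose h (bs : bool * K.-tuple bool) : K.+1.-tuple bool := [tuple of bs.1 :: bs.2].
pose hi (t : K.+1.-tuple bool) : bool * K.-tuple bool := (thead t, [tuple of behead t]).
have hK : cancel h hi by move=> [b s]; rewrite /h /hi /= theadE; congr pair; apply: val_inj.
have hiK : cancel hi h by move=> t; rewrite /h /hi /=; apply: val_inj => /=; rewrite [in RHS](tuple_eta t).
rewrite (reindex h); last by exists hi => ? _.
rewrite -(pair_big xpredT xpredT (fun b s => F (h (b, s)) * wt (h (b, s)))) /= big_bool /=.
rewrite !big_distrr /=; congr (_ + _); apply: eq_bigr => s _;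
  rewrite /wt big_ord_recl tnth0 /=; rewrite mulrCA; congr (_ * (_ * _)); apply: eq_bigr => i _; rewrite tnthS //.
Qed.


Fixpoint Aw (phi : nat -> R) (x : nat) (s : seq bool) : R :=
  match s with
  | [::] => 0
  | b :: s' => if b then Aw phi x.+1 s' else phi x + (if x is y.+1 then Aw phi y s' else 0)
  end.

Fixpoint Al (x : nat) (s : seq bool) : bool :=
  match s with
  | [::] => true
  | b :: s' => if b then Al x.+1 s' else (if x is y.+1 then Al y s' else false)
  end.

Fixpoint Lv (x : nat) (s : seq bool) : nat :=
  match s with
  | [::] => x
  | b :: s' => if b then Lv x.+1 s' else (if x is y.+1 then Lv y s' else 0%N)
  end.

Fixpoint Tm (x : nat) (s : seq bool) : nat :=
  match s with
  | [::] => 0%N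
  | b :: s' => (if b then Tm x.+1 s' else (if x is y.+1 then Tm y s' else 0%N)).+1
  end.

Lemma Tm_alive x s : Al x s -> Tm x s = size s.
Proof. by elim: s x => [|[] s IH] [|x] //= H; rewrite IH. Qed.

Lemma pot K x : Ex K (fun s => (Al x s)%:R * ((Lv x s)%:R + 1) + (p - q) * (Tm x s)%:R) = x%:R + 1.
Proof.
elim: K x => [|K IH] x /=; first by rewrite mul1r mulr0 addr0.
have E1 : Ex K (fun s => (Al x.+1 s)%:R * ((Lv x.+1 s)%:R + 1) + (p - q) * (Tm x.+1 s).+1%:R)
   = x.+1%:R + 1 + (p - q).
  rewrite -IH -[X in _ = _ + X](Ex_cst K (p - q)) -Ex_add; apply: Ex_eq => s.
  by rewrite -!natr1; ring.
rewrite E1; case: x E1 => [|x] E1 /=.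
  rewrite (Ex_eq _ (G := fun _ => p - q)); last by move=> s; rewrite mul0r add0r mulr1.
  rewrite Ex_cst (_ : q = 1 - p); last by rewrite -hpq; ring.
  by rewrite /= add0r; ring.
have E2 : Ex K (fun s => (Al x s)%:R * ((Lv x s)%:R + 1) + (p - q) * (Tm x s).+1%:R)
   = x%:R + 1 + (p - q).
  rewrite -IH -[X in _ = _ + X](Ex_cst K (p - q)) -Ex_add; apply: Ex_eq => s.
  by rewrite -!natr1; ring.
rewrite E2 -!natr1 (_ : q = 1 - p); last by rewrite -hpq; ring.
by ring.
Qed.

Lemma tail K x : K%:R * Ex K (fun s => (Al x s)%:R) <= (x%:R + 1) / (p - q).
Proof.
have hpq0 : 0 < p - q by rewrite subr_gt0.
rewrite ler_pdivlMr //.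
have -> : K%:R * Ex K (fun s => (Al x s)%:R) * (p - q) = Ex K (fun s => (p - q) * (K%:R * (Al x s)%:R)).
  by rewrite Ex_scale Ex_scale; ring.
rewrite -[X in _ <= X](pot K x).
rewrite (Ex_ext (G := fun s => (p - q) * ((size s)%:R * (Al x s)%:R))); last by move=> s ->.
apply: Ex_le => s; apply: (le_trans (y := (p - q) * (Tm x s)%:R)).
  apply: ler_wpM2l; first exact: ltW.
  by case A: (Al x s); rewrite ?mulr0 // Tm_alive // mulr1.
by rewrite lerDr mulr_ge0 // addr_ge0.
Qed.

Variables (n : nat) (phi : nat -> R).
Hypotheses (hphi0 : forall x, 0 <= phi x) (hphin : forall x, (n < x)%N -> phi x = 0).

Definition rr := q / p.
Definition hh x := \sum_(0 <= m < n.+1) rr ^+ m * phi (x + m).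
Definition gg x := \sum_(0 <= y < x.+1) hh y.

Lemma hh_rec x : hh x = phi x + rr * hh x.+1.
Proof.
rewrite /hh big_nat_recl // big_nat_recr //= expr0 mul1r addn0 (hphin (x := x.+1 + n)) ?mulr0 ?addr0; last by rewrite addSn ltnS leq_addl.
rewrite big_distrr /=; congr (_ + _); apply: eq_bigr => i _.
by rewrite exprS mulrA addSn addnS.
Qed.

Lemma hh_ge0 x : 0 <= hh x.
Proof. by apply: sumr_ge0 => m _; rewrite mulr_ge0 // exprn_ge0 // divr_ge0 // ltW // hp. Qed.

Lemma hh_eq0 x : (n < x)%N -> hh x = 0.
Proof. by move=> hx; apply: big1 => m _; rewrite hphin ?mulr0 // (leq_trans hx) // leq_addr. Qed.

Lemma p_hh x : p * hh x = p * phi x + q * hh x.+1.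
Proof. by rewrite hh_rec mulrDr mulrA /rr mulrCA divff ?mulr1 // gt_eqF // hp. Qed.

Lemma gg_S x : gg x.+1 = gg x + hh x.+1.
Proof. by rewrite /gg big_nat_recr. Qed.

Lemma gg_rec0 : gg 0 = q * gg 1 + p * phi 0.
Proof.
rewrite gg_S /gg big_nat1 mulrDr -addrA [_ + p * _]addrC -p_hh.
by rewrite -mulrDl addrC hpq mul1r.
Qed.

Lemma gg_recS x : gg x.+1 = q * gg x.+2 + p * (phi x.+1 + gg x).
Proof.
have := p_hh x.+1; rewrite !gg_S => E.
have qE : q = 1 - p by rewrite -hpq; ring.
rewrite qE in E *; nra.
Qed.

Lemma main K x : Ex K (Aw phi x) + Ex K (fun s => (Al x s)%:R * gg (Lv x s)) = gg x.
Proof.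
elim: K x => [|K IH] x /=; first by rewrite add0r mul1r.
case: x => [|x] /=.
  rewrite !Ex_cst addr0 mul0r gg_rec0 -(IH 1%N); ring.
rewrite gg_recS -(IH x.+2) -(IH x) Ex_add Ex_cst; ring.
Qed.

Lemma gg_ge0 x : 0 <= gg x.
Proof. by apply: sumr_ge0 => y _; exact: hh_ge0. Qed.

Definition Gm := gg n.

Lemma gg_le x : gg x <= Gm.
Proof.
rewrite /Gm /gg; case: (leqP x n) => hx.
  rewrite [X in _ <= X](big_cat_nat (n := x.+1)) //= lerDl; apply: sumr_ge0 => y _; exact: hh_ge0.
rewrite [X in X <= _](big_cat_nat (n := n.+1)) //=; last exact: ltnW.
rewrite [X in _ + X]big_nat_cond [X in _ + X]big1 ?addr0 // => y /andP[/andP[hy _] _]; exact: hh_eq0.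
Qed.

Lemma main_bound K : 0 <= gg 0 - Ex K (Aw phi 0) <= Gm * Ex K (fun s => (Al 0 s)%:R).
Proof.
rewrite -(main K 0) addrC addKr -Ex_scale; apply/andP; split.
  rewrite -(Ex_cst K 0); apply: Ex_le => s; rewrite mulr_ge0 ?gg_ge0 //.
apply: Ex_le => s; rewrite mulrC ler_wpM2r //; exact: gg_le.
Qed.



Lemma cvg_main : (fun K => Ex K (Aw phi 0)) @ \oo --> gg 0.
Proof.
have hpq0 : 0 < p - q by rewrite subr_gt0.
apply/cvgrPdist_le => e e0.
have Gm0 : 0 <= Gm by exact: gg_ge0.
set c := Gm / (p - q) / e.
have c0 : 0 <= c by rewrite /c !divr_ge0 // ltW.
near=> K.
have hK : c + 1 <= K%:R by near: K; apply: nbhs_infty_ger.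
have /andP[B1 B2] := main_bound K.
rewrite ger0_norm //.
apply: (le_trans B2).
have T := tail K 0; rewrite add0r in T.
have Ex0 : 0 <= Ex K (fun s => (Al 0 s)%:R).
  by rewrite -(Ex_cst K 0); apply: Ex_le => s.
have K0 : 0 < K%:R :> R by apply: lt_le_trans hK; rewrite ltr_pwDr.
have ce : c * e = Gm * (1 / (p - q)) by rewrite /c mulfVK ?gt_eqF // mul1r.
have H1 : Gm * (K%:R * Ex K (fun s => (Al 0 s)%:R)) <= c * e by rewrite ce ler_wpM2l.
have H2 : c * e <= K%:R * e.
  apply: ler_wpM2r; first exact: ltW.
  by apply: (le_trans _ hK); rewrite lerDl.
rewrite -(ler_pM2l K0); nra.
Unshelve. all: by end_near. Qed.


End Comb.

Section Closed.
Variables (R : realType) (p q : R).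
Hypotheses (hq : 0 <= q) (hqp : q < p) (hpq : p + q = 1).

Lemma sumA n : \sum_(0 <= m < n.+1) (q / p) ^+ m = p / (p - q) * (1 - (q / p) ^+ n.+1).
Proof.
have hp : p != 0 by rewrite gt_eqF // (le_lt_trans hq hqp).
have hpq0 : p - q != 0 by rewrite gt_eqF // subr_gt0.
elim: n => [|n IH]; first by rewrite big_nat1 expr0 expr1; field; rewrite ?hp ?hpq0.
rewrite big_nat_recr //= IH [(q / p) ^+ n.+2]exprS.
set z := (q / p) ^+ n.+1. field; by rewrite ?hp ?hpq0.
Qed.

Lemma sumB n : \sum_(0 <= m < n.+1) (q / p) ^+ m * m%:R - \sum_(0 <= m < n.+1) (q / p) ^+ m =
  p / (p - q) ^+ 2 * (2 * q - p - (q + n%:R * (p - q)) * (q / p) ^+ n.+1).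
Proof.
have hp : p != 0 by rewrite gt_eqF // (le_lt_trans hq hqp).
have hpq0 : p - q != 0 by rewrite gt_eqF // subr_gt0.
elim: n => [|n IH].
  rewrite !big_nat1 expr0 expr1 /=.
  by field; rewrite ?hp ?hpq0.
rewrite !(big_nat_recr n.+1 0) //= opprD addrACA IH [(q / p) ^+ n.+2]exprS.
set z := (q / p) ^+ n.+1. rewrite -natr1. field; by rewrite ?hp ?hpq0.
Qed.
End Closed.

Section Meas.
Variables (R : realType) (d : measure_display) (T : measurableType d)
  (P : probability T R) (xi : nat -> T -> R) (p q : R).
Hypotheses (hq : 0 <= q) (hqp : q < p) (hpq : p + q = 1)
  (hmeas : forall i, measurable_fun setT (xi i))
  (hlaw : step_law P xi p q).

Definition Cyl K (s : K.-tuple bool) : set T :=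
  [set t | forall i : 'I_K, xi i t = (if tnth s i then 1 else -1)].
Definition GdK K : set T := [set t | forall i : 'I_K, xi i t = 1 \/ xi i t = -1].
Definition Gd : set T := [set t | forall i, xi i t = 1 \/ xi i t = -1].
Definition Dg : set T := Gd `&` hits xi.
Definition bseq K t := [seq xi i t == 1 | i <- iota 0 K].
Definition bits K t : K.-tuple bool := [tuple xi i t == 1 | i < K].

Lemma bitsE K t : tval (bits K t) = bseq K t.
Proof.
rewrite /bits /bseq /= -val_enum_ord -map_comp; by [].
Qed.

Lemma bseqS K t : bseq K.+1 t = rcons (bseq K t) (xi K t == 1).
Proof. by rewrite /bseq -addn1 iotaD map_cat /= cats1. Qed.

Lemma m1n1 : (-1 : R) != 1.
Proof. by apply/eqP => H; lra. Qed.

Lemma CylP K (s : K.-tuple bool) t : Cyl s t <-> (GdK K t /\ s = bits K t).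
Proof.
split.
  move=> H; split.
    by move=> i; rewrite H; case: (tnth s i); [left|right].
  apply: eq_from_tnth => i; rewrite tnth_mktuple H.
  by case: (tnth s i); rewrite ?eqxx // (negbTE m1n1).
move=> [G ->] i; rewrite tnth_mktuple.
by case: (G i) => ->; rewrite ?eqxx // (negbTE m1n1).
Qed.

Lemma sum_C_in K (F : seq bool -> R) t : GdK K t ->
  \sum_(s : K.-tuple bool) F s * \1_(Cyl s) t = F (bits K t).
Proof.
move=> G; rewrite (bigD1 (bits K t)) //= big1 ?addr0.
  by rewrite indicE mem_set ?mulr1 //; apply/CylP.
move=> s hs; rewrite indicE memNset ?mulr0 // => /CylP [_ E].
by rewrite E eqxx in hs.
Qed.

Lemma sum_C_out K (F : seq bool -> R) t : ~ GdK K t ->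
  \sum_(s : K.-tuple bool) F s * \1_(Cyl s) t = 0.
Proof.
move=> G; rewrite big1 // => s _; rewrite indicE memNset ?mulr0 // => /CylP [].
by [].
Qed.


Lemma mxi_set i (c : R) : measurable [set t | xi i t = c].
Proof. by have := hmeas i measurableT (measurable_set1 c); rewrite setTI. Qed.

Lemma mCyl K (s : K.-tuple bool) : measurable (Cyl s).
Proof.
have -> : Cyl s = \bigcap_(i in [set i | (i < K)%N]) [set t | xi i t = (if nth false s i then 1 else -1)].
  apply/seteqP; split => t H.
    by move=> i /= hi; have := H (Ordinal hi); rewrite (tnth_nth false).
  by move=> i; rewrite (tnth_nth false); exact: (H _ (ltn_ord i)).
by apply: bigcap_measurableType => i _; exact: mxi_set.
Qed.

Lemma mGdK K : measurable (GdK K).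
Proof.
have -> : GdK K = \bigcap_(i in [set i | (i < K)%N]) ([set t | xi i t = 1] `|` [set t | xi i t = -1]).
  apply/seteqP; split => t H.
    by move=> i /= hi; have := H (Ordinal hi).
  by move=> i; exact: (H _ (ltn_ord i)).
by apply: bigcap_measurableType => i _; apply: measurableU; exact: mxi_set.
Qed.

Lemma mGd : measurable Gd.
Proof.
have -> : Gd = \bigcap_(i in setT) ([set t | xi i t = 1] `|` [set t | xi i t = -1]).
  by apply/seteqP; split => t H => [i _|i]; exact: H.
by apply: bigcap_measurableType => i _; apply: measurableU; exact: mxi_set.
Qed.

Lemma mwalk i : measurable_fun setT (walk xi i).
Proof. by rewrite /walk; apply: measurable_sum => j; exact: hmeas. Qed.

Lemma mwalk_set i (c : R) : measurable [set t | walk xi i t = c].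
Proof. by have := mwalk i measurableT (measurable_set1 c); rewrite setTI. Qed.

Lemma mhits : measurable (hits xi).
Proof.
have -> : hits xi = \bigcup_i [set t | walk xi i t = -1] by apply/seteqP; split => t; [move=> [i H]; exists i | move=> [i _ H]; exists i].
by apply: bigcupT_measurable => i; exact: mwalk_set.
Qed.

Lemma mDg : measurable Dg.
Proof. exact: measurableI mGd mhits. Qed.

Definition gK K (F : seq bool -> R) (t : T) : \bar R :=
  (\sum_(s : K.-tuple bool) (F s * \1_(Cyl s) t)%:E)%E.

Lemma mgK K F D : measurable_fun D (gK K F).
Proof.
apply: emeasurable_sum => s; apply/measurable_EFinP.
by apply: measurable_funM; [exact: measurable_cst | apply: measurable_indic; exact: mCyl].
Qed.

Lemma gK_ge0 K F t : (forall s, 0 <= F s) -> (0 <= gK K F t)%E.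
Proof. by move=> F0; apply: sume_ge0 => s _; rewrite lee_fin mulr_ge0. Qed.

Lemma int_gK K (F : seq bool -> R) : (forall s, 0 <= F s) ->
  (\int[P]_t gK K F t = (Ex p q K F)%:E)%E.
Proof.
move=> F0; rewrite /gK ge0_integral_sum //; last first.
- by move=> s t _; rewrite lee_fin mulr_ge0.
- move=> s; apply/measurable_EFinP.
  by apply: measurable_funM; [exact: measurable_cst | apply: measurable_indic; exact: mCyl].
rewrite (Ex_sum p q K F) -sumEFin; apply: eq_bigr => s _.
under eq_integral do rewrite EFinM.
rewrite ge0_integralZl_EFin //; last first.
  by apply/measurable_EFinP; apply: measurable_indic; exact: mCyl.
rewrite integral_indic //; last exact: mCyl.
rewrite setIT EFinM; congr (_ * _)%E; exact: hlaw.
Qed.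


Lemma sum_C_indic K (F : seq bool -> R) t A : (forall t, GdK K t -> (F (bits K t) = \1_A t)) ->
  (forall t, ~ GdK K t -> ~ A t) ->
  (gK K F t = (\1_A t)%:E)%E.
Proof.
move=> H1 H2; rewrite /gK sumEFin; congr EFin.
case: (pselect (GdK K t)) => G; first by rewrite sum_C_in // H1.
by rewrite sum_C_out // indicE memNset //; exact: H2.
Qed.

Lemma PGdK K : P (GdK K) = 1%E.
Proof.
have E : (\int[P]_t (\1_(GdK K) t)%:E = \int[P]_t gK K (fun _ => 1%R) t)%E.
  apply: eq_integral => t _; apply/esym/sum_C_indic => t' G //.
  by rewrite indicE mem_set.
rewrite int_gK // (Ex_cst hpq) integral_indic // ?setIT in E; last exact: mGdK.
exact: E.
Qed.

Lemma PnGdK K : P (~` GdK K) = 0%E.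
Proof. by rewrite probability_setC ?PGdK ?subee //; exact: mGdK. Qed.

Lemma negl_nGd : P.-negligible (~` Gd).
Proof.
apply: (negligibleS (A := \bigcup_k ~` GdK k)).
  move=> t /= nG.
  have [i Hi] : exists i, ~ (xi i t = 1 \/ xi i t = -1).
    by apply: contrapT => H; apply: nG => i; apply: contrapT => Hi; apply: H; exists i.
  by exists i.+1 => //= G; apply: Hi; exact: (G (Ordinal (ltnSn i))).
apply: negligible_bigcup => k; apply/negligibleP; last exact: PnGdK.
by apply: measurableC; exact: mGdK.
Qed.


Lemma walk0 t : walk xi 0 t = 0.
Proof. by rewrite /walk big_ord0. Qed.

Lemma walkS i t : walk xi i.+1 t = walk xi i t + xi i t.
Proof. by rewrite /walk big_ord_recr. Qed.

Lemma nu_spec t : hits xi t ->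
  walk xi (nu xi t) t = -1 /\ forall j, (j < nu xi t)%N -> walk xi j t != -1.
Proof.
move=> H; rewrite /nu; case: pselect => // H'.
case: ex_minnP => m /eqP Hm Hmin; split => // j hj; apply/negP => /Hmin.
by rewrite leqNgt hj.
Qed.

Lemma nu_nhits t : ~ hits xi t -> nu xi t = 0%N.
Proof. by rewrite /nu; case: pselect. Qed.

Lemma Al_rcons x s b : Al x (rcons s b) = Al x s && (b || (0 < Lv x s)%N).
Proof. by elim: s x => [|[] s IH] [|x] //=; case: b. Qed.

Lemma Lv_rcons x s b : Al x s -> Lv x (rcons s b) = if b then (Lv x s).+1 else (Lv x s).-1.
Proof. by elim: s x => [|[] s IH] [|x] //= H; rewrite IH. Qed.

Lemma Aw_rcons (phi : nat -> R) x s b :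
  Aw phi x (rcons s b) = Aw phi x s + (Al x s)%:R * (if b then 0 else phi (Lv x s)).
Proof.
elim: s x => [|[] s IH] [|x] //=.
- by rewrite mul1r; case: b; rewrite /= ?addr0 ?add0r.
- by rewrite mul1r; case: b; rewrite /= ?addr0 ?add0r.
- by rewrite mul0r !addr0.
- by rewrite IH addrA.
Qed.

Lemma bridge_al t : Gd t -> forall K,
  (Al 0 (bseq K t) <-> forall j, (j <= K)%N -> walk xi j t != -1) /\
  (Al 0 (bseq K t) -> walk xi K t = (Lv 0 (bseq K t))%:R).
Proof.
move=> G; elim=> [|K [IH1 IH2]].
  split=> //=; last by rewrite walk0.
  split=> // _ j; rewrite leqn0 => /eqP ->; rewrite walk0; apply/eqP => H; lra.
rewrite bseqS Al_rcons; set s := bseq K t; set L := Lv 0 s.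
have L0 : 0 <= L%:R :> R by [].
split.
  split.
    move=> /andP[A B] j; rewrite leq_eqVlt => /orP[/eqP ->|hj]; last by apply: (IH1.1 A).
    rewrite walkS (IH2 A) -/L; case: (G K) => X; rewrite X; first by apply/eqP => H; lra.
    move: B; rewrite X (negbTE m1n1) /= => B; apply/eqP => H.
    have : L%:R = 0 :> R by lra.
    by move/eqP; rewrite pnatr_eq0 => /eqP HL; rewrite HL in B.
  move=> H; have A : Al 0 s by apply/IH1 => j hj; apply: H; exact: (leq_trans hj).
  rewrite A /=; case: (G K) => X; rewrite X ?eqxx //= (negbTE m1n1) /=.
  have := H K.+1 (leqnn _); rewrite walkS (IH2 A) -/L X.
  by case: (L) => //=; rewrite add0r eqxx.
move=> /andP[A B]; rewrite Lv_rcons // walkS (IH2 A) -/L.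
case: (G K) => X; rewrite X ?eqxx; first by rewrite -natr1.
rewrite X (negbTE m1n1) /= in B.
by case: (L) B => //= L' _; rewrite (negbTE m1n1) -natr1 addrK.
Qed.

Lemma Al_nu t : Dg t -> forall K, Al 0 (bseq K t) = (K < nu xi t)%N.
Proof.
move=> [G H] K; have [N1 N2] := nu_spec H.
apply/idP/idP.
  move/(bridge_al G K).1 => A; rewrite ltnNge; apply/negP => hK.
  by have := A _ hK; rewrite N1 eqxx.
move=> hK; apply/(bridge_al G K).1 => j hj; apply: N2; exact: (leq_ltn_trans hj).
Qed.

Lemma bridge_aw (phi psi : nat -> R) t : Dg t ->
  (forall i (x : nat), walk xi i t = x%:R -> psi i.+1 = if xi i t == 1 then 0 else phi x) ->
  forall K, Aw phi 0 (bseq K t) = \sum_(1 <= i < K.+1) (i <= nu xi t)%:R * psi i.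
Proof.
move=> Dt Hpsi; elim=> [|K IH]; first by rewrite big_geq.
rewrite bseqS Aw_rcons IH [RHS]big_nat_recr //=; congr (_ + _).
rewrite (Al_nu Dt); case hK: (K < nu xi t)%N; last by rewrite !mul0r.
rewrite !mul1r (Hpsi K (Lv 0 (bseq K t))) //.
apply: (bridge_al Dt.1 K).2; by rewrite (Al_nu Dt).
Qed.

Lemma sum_nu (psi : nat -> R) (nu0 K : nat) : (nu0 <= K)%N ->
  \sum_(1 <= i < K.+1) (i <= nu0)%:R * psi i = \sum_(1 <= i < nu0.+1) psi i.
Proof.
move=> hK; rewrite (big_cat_nat (n := nu0.+1)) //=.
rewrite [X in _ + X]big_nat_cond [X in _ + X]big1 ?addr0; last first.
  by move=> i /andP[/andP[hi _] _]; rewrite leqNgt hi mul0r.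
rewrite big_nat_cond [RHS]big_nat_cond; apply: eq_bigr => i /andP[/andP[_ hi] _].
by rewrite ltnS in hi; rewrite hi mul1r.
Qed.


Lemma mA0 : measurable (Gd `&` ~` hits xi).
Proof. by apply: measurableI; [exact: mGd | apply: measurableC; exact: mhits]. Qed.

Lemma PA_le K : (P (Gd `&` ~` hits xi) <= (Ex p q K (fun s => (Al 0 s)%:R))%:E)%E.
Proof.
rewrite -(setIT (Gd `&` ~` hits xi)) -integral_indic //; last exact: mA0.
rewrite -int_gK //; apply: ge0_le_integral => //.
- by apply/measurable_EFinP; apply: measurable_indic; exact: mA0.
- exact: mgK.
move=> t _; rewrite indicE; case: (boolP (t \in _)) => H; last by rewrite /= gK_ge0.
have [G NH] := set_mem H.
rewrite /gK sumEFin (@sum_C_in K (fun s => (Al 0 s)%:R) t); last by move=> i; exact: G.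
rewrite bitsE lee_fin; case A: (Al 0 (bseq K t)) => //.
have : Al 0 (bseq K t).
  apply/(bridge_al G K).1 => j _; apply/eqP => Hj; apply: NH; by exists j.
by rewrite A.
Qed.

Lemma PA0 : P (Gd `&` ~` hits xi) = 0%E.
Proof.
have hpq0 : 0 < p - q by rewrite subr_gt0.
have a0 := measure_ge0 P (Gd `&` ~` hits xi).
have a1 := probability_le1 P mA0.
have afin : P (Gd `&` ~` hits xi) \is a fin_num by rewrite ge0_fin_numE // (le_lt_trans a1) ?ltry.
rewrite -(fineK afin); congr EFin.
set r := fine _.
have r0 : 0 <= r by rewrite fine_ge0.
apply/eqP; rewrite eq_le r0 andbT; apply/negP => /negP; rewrite -ltNge => rpos.
set c := 1 / (p - q).
have c0 : 0 <= c by rewrite divr_ge0 // ltW.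
have hb := archi_boundP (divr_ge0 c0 (ltW rpos)).
set K := Num.bound (c / r) in hb.
have T1 := tail hq hqp hpq K 0; rewrite add0r -/c in T1.
have T2 : r <= Ex p q K (fun s => (Al 0 s)%:R) by rewrite -lee_fin /r fineK // PA_le.
have K0 : 0 <= K%:R :> R by [].
have : K%:R * r <= c by apply: le_trans T1; rewrite ler_wpM2l.
rewrite ltr_pdivrMr // in hb; lra.
Qed.

Lemma negl_nDg : P (~` Dg) = 0%E.
Proof.
apply/negligibleP; first by apply: measurableC; exact: mDg.
apply: (negligibleS (A := ~` Gd `|` (Gd `&` ~` hits xi))).
  move=> t /= H; case: (pselect (Gd t)) => G; [right; split => // Ht; exact: H | by left].
apply: negligibleU; first exact: negl_nGd.
by apply/negligibleP; [exact: mA0 | exact: PA0].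
Qed.


Lemma mboolR (b : T -> bool) : measurable_fun setT b -> measurable_fun setT (fun t => (b t)%:R : R).
Proof. by move=> mb; apply: (measurableT_comp (f := fun x : bool => (x%:R : R))). Qed.

Lemma mle_nu i : measurable_fun setT (fun t => (i <= nu xi t)%N).
Proof.
case: i => [|j].
  by rewrite (_ : (fun t => _) = cst true); [exact: measurable_cst | apply/funext].
apply: (measurable_fun_bool true).
have -> : setT `&` (fun t => (j.+1 <= nu xi t)%N) @^-1` [set true] =
    hits xi `&` \bigcap_(l in [set l | (l <= j)%N]) (~` [set t | walk xi l t = -1]).
  apply/seteqP; split => t /=.
    move=> [_ H]; have Hh : hits xi t.
      by apply: contrapT => Hn; move: H; rewrite nu_nhits.
    split => // l hl /= E; have [_ N2] := nu_spec Hh.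
    by have := N2 l (leq_ltn_trans hl H); rewrite E eqxx.
  move=> [Hh Hl]; split => //; have [N1 _] := nu_spec Hh.
  rewrite ltnNge; apply/negP => hn; exact: (Hl _ hn N1).
apply: measurableI; first exact: mhits.
by apply: bigcap_measurableType => l _; apply: measurableC; exact: mwalk_set.
Qed.

Lemma msum_nu (psi : nat -> T -> R) : (forall i, measurable_fun setT (psi i)) ->
  measurable_fun setT (fun t => \sum_(1 <= i < (nu xi t).+1) psi i t).
Proof.
move=> mpsi.
apply: (measurable_fun_cvg (h := fun K t => \sum_(1 <= i < K.+1) (i <= nu xi t)%:R * psi i t)).
  move=> K; apply: measurable_sum => i; apply: measurable_funM => //.
  exact: mboolR (mle_nu i).
move=> t _; apply: cvg_near_cst; near=> K.
apply: sum_nu; near: K; exact: nbhs_infty_ge.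
Unshelve. all: by end_near. Qed.

Lemma mdb n i : measurable_fun setT (down_below xi n i).
Proof.
apply: measurable_and; apply: measurable_fun_ltr; try exact: mwalk.
exact: measurable_cst.
Qed.

Lemma mu_n n : measurable_fun setT (u_n xi n).
Proof. by apply: msum_nu => i; apply: mboolR; exact: mdb. Qed.

Lemma mv_n n : measurable_fun setT (v_n xi n).
Proof. by apply: msum_nu => i; apply: measurable_funM; [exact: mwalk | apply: mboolR; exact: mdb]. Qed.


Lemma Aw_ge0 (phi : nat -> R) : (forall x, 0 <= phi x) -> forall x s, 0 <= Aw phi x s.
Proof.
move=> phi0 x s; elim: s x => [|[] s IH] [|x] //=; rewrite ?addr0 //.
by rewrite addr_ge0.
Qed.

Lemma Aw_mono (phi : nat -> R) t : (forall x, 0 <= phi x) ->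
  forall K m, (K <= m)%N -> Aw phi 0 (bseq K t) <= Aw phi 0 (bseq m t).
Proof.
move=> phi0; have H : nondecreasing_seq (fun K => Aw phi 0 (bseq K t)).
  apply/nondecreasing_seqP => k.
  rewrite bseqS Aw_rcons lerDl mulr_ge0 //; by case: ifP.
exact: H.
Qed.

Lemma gK_Dg K F t : Dg t -> gK K F t = (F (bseq K t))%:E.
Proof. by move=> [G _]; rewrite /gK sumEFin sum_C_in ?bitsE // => i; exact: G. Qed.

Lemma int_D (f : T -> \bar R) : measurable_fun setT f -> (forall t, 0 <= f t)%E ->
  (\int[P]_t f t = \int[P]_(t in Dg) f t)%E.
Proof.
move=> mf f0; rewrite (ge0_negligible_integral (mu := P) (D := setT) (N := ~` Dg)) //.
- by rewrite setTD setCK.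
- by apply: measurableC; exact: mDg.
- exact: negl_nDg.
Qed.

Lemma MCT (n : nat) (phi : nat -> R) (f : T -> R) :
  (forall x, 0 <= phi x) -> (forall x, (n < x)%N -> phi x = 0) ->
  (forall t, Dg t -> forall K, (nu xi t <= K)%N -> Aw phi 0 (bseq K t) = f t) ->
  (\int[P]_(t in Dg) (f t)%:E = (gg p q n phi 0)%:E)%E.
Proof.
move=> phi0 phin hf.
have F0 : forall s, 0 <= Aw phi 0 s by move=> s; exact: Aw_ge0.
have E1 : (\int[P]_(t in Dg) (f t)%:E = \int[P]_(t in Dg) limn ((fun K => gK K (Aw phi 0))^~ t))%E.
  apply: eq_integral => t /set_mem Dt; apply/esym/cvg_lim => //.
  apply: cvg_near_cst; near=> K; rewrite gK_Dg // (hf t Dt K) //.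
  by near: K; exact: nbhs_infty_ge.
rewrite E1 monotone_convergence //; first last.
- move=> t Dt m k hmk; rewrite !gK_Dg // lee_fin; exact: Aw_mono.
- by move=> K t Dt; exact: gK_ge0.
- by move=> K; exact: mgK.
- exact: mDg.
have E2 : (fun K => \int[P]_(t in Dg) gK K (Aw phi 0) t)%E = EFin \o (fun K => Ex p q K (Aw phi 0)).
  apply/funext => K /=; rewrite -int_D ?int_gK //; first exact: mgK.
  by move=> t; exact: gK_ge0.
have C := cvg_main hq hqp hpq phi0 phin.
rewrite E2 EFin_lim; last by apply/cvg_ex; exists (gg p q n phi 0).
by rewrite (cvg_lim _ C).
Unshelve. all: by end_near. Qed.


Lemma psi_u_hyp n t : Gd t -> forall i (x : nat), walk xi i t = x%:R ->
  (down_below xi n i.+1 t)%:R = if xi i t == 1 then 0 else (x <= n)%:R :> R.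
Proof.
move=> G i x Hx; rewrite /down_below /= walkS Hx; case: (G i) => X; rewrite X.
  rewrite eqxx; have -> : (x%:R + 1 < x%:R :> R) = false.
    by apply/negbTE; rewrite -leNgt lerDl.
  by rewrite andbF.
rewrite (negbTE m1n1); have -> : (x%:R + -1 < x%:R :> R) = true.
  by rewrite gtrDl oppr_lt0 ltr01.
by rewrite andbT ltrBlDr natr1 ltr_nat ltnS.
Qed.

Lemma u_eq n t : Dg t -> forall K, (nu xi t <= K)%N ->
  Aw (fun x => (x <= n)%:R) 0 (bseq K t) = u_n xi n t.
Proof.
move=> Dt K hK.
rewrite (bridge_aw (psi := fun i => (down_below xi n i t)%:R) Dt); last exact: psi_u_hyp Dt.1.
exact: sum_nu.
Qed.

Lemma w_eq n t : Dg t -> forall K, (nu xi t <= K)%N ->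
  Aw (fun x => x%:R * (x <= n)%:R) 0 (bseq K t) = v_n xi n t + u_n xi n t.
Proof.
move=> Dt K hK.
rewrite (bridge_aw (psi := fun i => (walk xi i t + 1) * (down_below xi n i t)%:R) Dt); last first.
  move=> i x Hx; rewrite (psi_u_hyp n Dt.1 Hx).
  case X: (xi i t == 1); first by rewrite mulr0.
  rewrite walkS Hx; case: (Dt.1 i) => Y; first by rewrite Y eqxx in X.
  by rewrite Y addrNK.
rewrite sum_nu // /v_n /u_n -big_split; apply: eq_bigr => i _.
by rewrite mulrDl mul1r.
Qed.

Lemma final_u n : (\int[P]_t (u_n xi n t)%:E = (p / (p - q) * (1 - (q / p) ^+ n.+1))%:E)%E.
Proof.
rewrite int_D; last 2 first.
- by apply/measurable_EFinP; exact: mu_n.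
- by move=> t; rewrite lee_fin; apply: sumr_ge0 => i _.
rewrite (MCT (n := n) (phi := fun x => (x <= n)%:R) (f := u_n xi n)) //; last 2 first.
- by move=> x hx; rewrite leqNgt hx.
- by move=> t Dt K hK; exact: u_eq.
congr EFin; rewrite /gg big_nat1 /hh /rr -(sumA hq hqp n).
apply: eq_big_nat => m /andP[_ hm]; by rewrite add0n -ltnS hm mulr1.
Qed.


Lemma final_v n : (\int[P]_t (v_n xi n t)%:E =
     (p / (p - q) ^+ 2 *
      (2 * q - p - (q + n%:R * (p - q)) * (q / p) ^+ n.+1))%:E)%E.
Proof.
set w := fun t => v_n xi n t + u_n xi n t.
have mw : measurable_fun setT w by apply: measurable_funD; [exact: mv_n | exact: mu_n].
have w0 t : Dg t -> 0 <= w t.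
  move=> Dt; rewrite /w -(w_eq n Dt (leqnn _)); apply: Aw_ge0 => x; exact: mulr_ge0.
have u0 t : 0 <= u_n xi n t by apply: sumr_ge0.
have Iw : (\int[P]_(t in Dg) (w t)%:E = (gg p q n (fun x => x%:R * (x <= n)%:R) 0)%:E)%E.
  apply: MCT.
  - by move=> x; exact: mulr_ge0.
  - by move=> x hx; rewrite leqNgt hx mulr0.
  - by move=> t Dt K hK; exact: w_eq.
have Iu : (\int[P]_(t in Dg) (u_n xi n t)%:E = (gg p q n (fun x => (x <= n)%:R) 0)%:E)%E.
  apply: MCT.
  - by [].
  - by move=> x hx; rewrite leqNgt hx.
  - by move=> t Dt K hK; exact: u_eq.
have mu' : measurable_fun setT (EFin \o u_n xi n) by apply/measurable_EFinP; exact: mu_n.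
have mw' : measurable_fun setT (EFin \o w) by apply/measurable_EFinP.
have intu : P.-integrable setT (EFin \o u_n xi n).
  apply/integrableP; split => //.
  under eq_integral do rewrite /= ger0_norm //.
  by rewrite int_D // ?Iu ?ltry // => t; rewrite lee_fin.
have intw : P.-integrable setT (EFin \o w).
  apply/integrableP; split => //.
  rewrite int_D; last 2 first.
  - by apply: measurableT_comp => //; exact: abse_measurable.
  - by move=> t; exact: abse_ge0.
  rewrite (eq_integral (fun t => (w t)%:E)) ?Iw ?ltry //.
  by move=> t /set_mem Dt /=; rewrite ger0_norm // w0.
have -> : (\int[P]_t (v_n xi n t)%:E = \int[P]_t ((w t)%:E - (u_n xi n t)%:E))%E.
  by apply: eq_integral => t _; rewrite /w -EFinB addrK.
rewrite integralB_EFin //.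
rewrite (negligible_integral (mu := P) (D := setT) (N := ~` Dg)) //; last 2 first.
- by apply: measurableC; exact: mDg.
- exact: negl_nDg.
rewrite setTD setCK Iw (int_D (f := EFin \o u_n xi n)) //.
have Iu' : (\int[P]_(t in Dg) (EFin \o u_n xi n) t = (gg p q n (fun x => (x <= n)%:R) 0)%:E)%E := Iu.
rewrite Iu' -EFinB; congr EFin.
rewrite /gg !big_nat1 /hh /rr -(sumB hq hqp n); congr (_ - _); apply: eq_big_nat => m /andP[_ hm];
  by rewrite add0n -ltnS hm mulr1.
Qed.

End Meas.

Theorem lemma7 (R : realType) (d : measure_display) (T : measurableType d)
  (P : probability T R) (xi : nat -> T -> R) (p q : R)
  (hq : 0 <= q) (hqp : q < p) (hpq : p + q = 1)
  (hmeas : forall i, measurable_fun setT (xi i))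
  (hlaw : step_law P xi p q) (n : nat) :
  (\int[P]_t (u_n xi n t)%:E = (p / (p - q) * (1 - (q / p) ^+ n.+1))%:E)%E /\
  (\int[P]_t (v_n xi n t)%:E =
     (p / (p - q) ^+ 2 *
      (2 * q - p - (q + n%:R * (p - q)) * (q / p) ^+ n.+1))%:E)%E.
Proof.
split; [exact: (final_u hq hqp hpq hmeas hlaw) | exact: (final_v hq hqp hpq hmeas hlaw)].
Qed.
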